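(* Let $M$ be a strong $r$-helix hypersurface in $E^n$ with space of helix directions $H(M)\subset\mathbb{R}^n$. Let $\alpha: I\subset\mathbb{R}\to M$ be a unit speed (arc-length parametrized) curve on $M$ with Frenet frame $\{V_1(s),\dots,V_n(s)\}$. If $\alpha$ is a geodesic curve on $M$, then for every $d\in H(M)$, $d\in\mathrm{Sp}\{V_2'\}^\perp$ along $\alpha$, i.e. $\langle V_2'(s),d\rangle=0$ for all $s\in I$.
   Context: $\langle\cdot,\cdot\rangle$ is the standard inner product on $E^n=\mathbb{R}^n$. For a hypersurface $M\subset\mathbb{R}^n$ with unit normal $N$, a vector $d$ is a helix direction of $M$ if the angle between $d$ and $T_pM$ is the same for all $p\in M$, equivalently $\langle N,d\rangle$ is constant on $M$. $H(M)$ is the set of helix directions; $M$ is a strong $r$-helix if $H(M)$ is an $r$-dimensional linear subspace. The Frenet frame of a unit speed curve with nonvanishing curvatures $k_i$ is the orthonormal frame $\{V_1=\alpha',V_2,\dots,V_n\}$ with $V_1'=k_1V_2$, $V_i'=-k_{i-1}V_{i-1}+k_iV_{i+1}$ ($1<i<n$), $V_n'=-k_{n-1}V_{n-1}$. A curve on $M$ is a geodesic if $\alpha''$ is normal to $M$. $\mathrm{Sp}\{v\}^\perp$ is the orthogonal complement of the span of $v$. *)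

(* Defs.v *)
From HB Require Import structures.
From mathcomp Require Import all_boot all_order all_algebra.
From mathcomp Require Import all_classical all_reals all_analysis.
Set Implicit Arguments. Unset Strict Implicit. Unset Printing Implicit Defensive.
Import Order.TTheory GRing.Theory Num.Theory.
Import numFieldNormedType.Exports.
Local Open Scope classical_set_scope.
Local Open Scope ring_scope.

Section Defs.
Variables (R : realType) (n : nat).
Notation vec := 'rV[R]_n.

Definition dot (u v : vec) : R := \sum_(i < n) u ord0 i * v ord0 i.

Definition tangent_space (M : set vec) (p : vec) : set vec :=
  [set v | exists g : R -> vec,
     [/\ g 0 = p, (\forall t \near 0, M (g t)), derivable g 0 1
       & derive1 g 0 = v]].

Definition hypersurface_with_normal (M : set vec) (N : vec -> vec) : Prop :=
  {within M, continuous N} /\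
  forall p, M p ->
    dot (N p) (N p) = 1 /\ (forall v, tangent_space M p v <-> dot v (N p) = 0).

Definition helix_direction (M : set vec) (N : vec -> vec) (d : vec) : Prop :=
  exists c : R, forall p, M p -> dot (N p) d = c.

(* strong r-helix: H(M) is an r-dimensional linear subspace, i.e. the row
   space of a row-free r x n matrix *)
Definition strong_helix (M : set vec) (N : vec -> vec) (r : nat) : Prop :=
  exists B : 'M[R]_(r, n), row_free B /\
    forall d : vec, helix_direction M N d <-> (d <= B)%MS.

Definition unit_speed_curve_on (M : set vec) (I : set R) (alpha : R -> vec) :=
  forall s, I s -> [/\ M (alpha s), derivable alpha s 1
                     & dot (derive1 alpha s) (derive1 alpha s) = 1].

(* Frenet frame {V 1, ..., V n} (indices 1..n as in the paper) with
   nonvanishing curvatures k 1, ..., k (n-1) along alpha on I *)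
Definition frenet_frame (I : set R) (alpha : R -> vec)
    (V : nat -> R -> vec) (k : nat -> R -> R) : Prop :=
  forall s, I s ->
  [/\ (forall i j, (1 <= i <= n)%N -> (1 <= j <= n)%N ->
        dot (V i s) (V j s) = (i == j)%:R),
      V 1%N s = derive1 alpha s,
      (forall i, (1 <= i <= n)%N -> derivable (V i) s 1),
      (forall i, (1 <= i < n)%N -> k i s != 0)
    & [/\ derive1 (V 1%N) s = k 1%N s *: V 2%N s,
      (forall i, (1 < i < n)%N ->
        derive1 (V i) s = - (k i.-1 s *: V i.-1 s) + k i s *: V i.+1 s)
    & derive1 (V n) s = - (k n.-1 s *: V n.-1 s)]].

Definition geodesic_on (M : set vec) (I : set R) (alpha : R -> vec) : Prop :=
  forall s, I s ->
    [/\ derivable alpha s 1, derivable (derive1 alpha) s 1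
      & (forall v, tangent_space M (alpha s) v ->
          dot (derive1 (derive1 alpha) s) v = 0)].

End Defs.

(* Main.v *)
Require Import Defs.
From HB Require Import structures.
From mathcomp Require Import all_boot all_order all_algebra.
From mathcomp Require Import all_classical all_reals all_analysis.
Import Order.TTheory GRing.Theory Num.Theory.
Import numFieldNormedType.Exports.
Local Open Scope classical_set_scope.
Local Open Scope ring_scope.

Section H.
Variables (R : realType) (n : nat).

Lemma dot_cont (d : 'rV[R]_n) : continuous (fun u : 'rV[R]_n => dot u d).
Proof.
rewrite /dot.
apply: (@continuous_big _ _ +%R 0 xpredT).
  by move=> [x y]; apply: add_continuous.
move=> i _ x; apply: (@continuousM _ _ (fun u : 'rV[R]_n => u ord0 i) (fun=> d ord0 i)); first exact: coord_continuous.
exact: cst_continuous.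
Qed.

Definition dotl (d : 'rV[R]_n) (u : 'rV[R]_n) : R^o := dot u d.

Lemma dotl_lin d : linear (dotl d).
Proof.
move=> a u v; rewrite /dotl /dot /= scaler_sumr -big_split /=; apply: eq_bigr => i _.
rewrite !mxE mulrDl; congr (_ + _); rewrite /GRing.scale /= mulrA.
by [].
Qed.

HB.instance Definition _ d := GRing.isLinear.Build _ _ _ _ (dotl d) (dotl_lin d).

Lemma derive_dot (f : R -> 'rV[R]_n) d x : derivable f x 1 ->
  'D_1 (fun t => dot (f t) d) x = dot ('D_1 f x) d.
Proof.
move=> df.
have dfx : differentiable f x by apply/derivable1_diffP.
have cL : continuous (dotl d) by exact: dot_cont.
have dL : differentiable (dotl d) (f x) by exact: linear_differentiable.
rewrite (_ : (fun t => dot (f t) d) = dotl d \o f) //.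
rewrite deriveE; last exact: differentiable_comp.
rewrite diff_comp // diff_lin //= -deriveE //.
Qed.
Implicit Types u v w : 'rV[R]_n.
Lemma dotC u v : dot u v = dot v u.
Proof. by rewrite /dot; apply: eq_bigr => i _; rewrite mulrC. Qed.
Lemma dotBl u v w : dot (u - v) w = dot u w - dot v w.
Proof. by rewrite /dot -sumrB; apply: eq_bigr => i _; rewrite !mxE mulrBl. Qed.
Lemma dotZl a u w : dot (a *: u) w = a * dot u w.
Proof. by rewrite /dot mulr_sumr; apply: eq_bigr => i _; rewrite !mxE mulrA. Qed.
Lemma dot_eq0 u : dot u u = 0 -> u = 0.
Proof.
move=> h; apply/matrixP => i j; rewrite (ord1 i) mxE.
move/eqP: h; rewrite /dot psumr_eq0; last by move=> k _; rewrite -expr2 sqr_ge0.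
by move/allP/(_ j (mem_index_enum _)) => /=; rewrite -expr2 sqrf_eq0 => /eqP.
Qed.

Lemma derivable_dot (f : R -> 'rV[R]_n) d x : derivable f x 1 ->
  derivable (fun t => dot (f t) d : R^o) x 1.
Proof.
move=> df.
have dfx : differentiable f x by apply/derivable1_diffP.
have cL : continuous (dotl d) by exact: dot_cont.
have dL : differentiable (dotl d) (f x) by exact: linear_differentiable.
apply/derivable1_diffP.
exact: (differentiable_comp dfx dL).
Qed.
End H.

Theorem theorem3p5 (R : realType) (n r : nat) (M : set 'rV[R]_n)
    (N : 'rV[R]_n -> 'rV[R]_n) (I : set R) (alpha : R -> 'rV[R]_n)
    (V : nat -> R -> 'rV[R]_n) (k : nat -> R -> R) :
  (2 <= n)%N ->
  hypersurface_with_normal M N ->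
  strong_helix M N r ->
  open I -> is_interval I ->
  unit_speed_curve_on M I alpha ->
  frenet_frame I alpha V k ->
  geodesic_on M I alpha ->
  forall d : 'rV[R]_n, helix_direction M N d ->
  forall s, I s -> dot (derive1 (V 2%N) s) d = 0.
Proof.
move=> n2 [_ hyp] _ oI _ us fr geo d [c hc] s Is.
pose f t := dot (V 2%N t) d.
have key : forall t, I t -> f t ^+ 2 = c ^+ 2.
  move=> t It.
  have [Mt _ _] := us t It.
  have [Np1 tang] := hyp _ Mt.
  have [orth V1 dV kn [dV1 _ _]] := fr t It.
  have [_ _ g0] := geo t It.
  have nI : nbhs t I by apply: open_nbhs_nbhs; split.
  have e2 : derive1 (derive1 alpha) t = derive1 (V 1%N) t.
    rewrite !derive1E; apply: near_eq_derive.
    apply: filterS nI => u Iu; have [_ -> _ _ _] := fr u Iu; by [].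
  rewrite e2 dV1 in g0.
  set Np := N (alpha t) in Np1 tang hc.
  set sg := dot (V 2%N t) Np.
  set w := V 2%N t - sg *: Np.
  have wN : dot w Np = 0 by rewrite /w dotBl dotZl Np1 mulr1 subrr.
  have Vw : dot (V 2%N t) w = 0.
    have := g0 w ((tang w).2 wN); rewrite dotZl => /eqP.
    rewrite mulf_eq0 (negbTE (kn 1%N _)) //=.
    by move/eqP.
  have w0 : w = 0.
    apply: dot_eq0; rewrite {1}/w dotBl dotZl (@dotC _ _ Np) wN mulr0 subr0; exact: Vw.
  have V2e : V 2%N t = sg *: Np by apply/eqP; rewrite -subr_eq0 -/w w0.
  have sg2 : sg ^+ 2 = 1.
    have := orth 2%N 2%N; rewrite /= n2 => /(_ isT isT).
    rewrite V2e dotZl dotC dotZl Np1 mulr1 -expr2.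
    by [].
  by rewrite /f V2e dotZl hc // exprMn sg2 mul1r.
have dV2 : derivable (V 2%N) s 1.
  by have [_ _ dV _ _] := fr s Is; apply: dV; rewrite /= n2.
rewrite derive1E -derive_dot //.
have nI : nbhs s I by apply: open_nbhs_nbhs; split.
have [c0|c0] := eqVneq c 0.
  rewrite (@near_eq_derive _ _ _ _ (cst (0:R^o))); first by rewrite derive_cst.
  apply: filterS nI => u Iu; have := key u Iu; rewrite c0 expr0n /= => /eqP.
  by rewrite sqrf_eq0 => /eqP.
have df : derivable (fun t => dot (V 2%N t) d : R^o) s 1 := @derivable_dot R n (V 2%N) d s dV2.
have h : 'D_1 ((fun t => dot (V 2%N t) d : R^o) * (fun t => dot (V 2%N t) d : R^o)) s = 0.
  rewrite (@near_eq_derive _ _ _ _ (cst (c^+2 : R^o))) ?derive_cst //.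
  by apply: filterS nI => u Iu /=; rewrite -(key u Iu) /f expr2.
rewrite deriveM // in h.
have fs0 : f s != 0.
  apply/negP => /eqP fs0; move: (key s Is); rewrite fs0 expr0n /= => /esym/eqP.
  by rewrite sqrf_eq0 (negbTE c0).
move: h; rewrite -mulr2n => /eqP; rewrite mulrn_eq0 /= scaler_eq0 (negbTE fs0) /=.
by move/eqP.
Qed.
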